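(* Let $s,t,m$ be positive integers with $s\le t$, $s\mid m$, $m\ge t+2$, let $n=m^2$, and let $z=s(\lceil (t+2)/s\rceil-1)$. Let $v(0),\dots,v(m-1)$ be integers with $0\le v(j)\le t-1-(j\bmod s)$ for all $j$ and $v(j)=0$ for $m-z\le j\le m-1$. Starting from any configuration of distinct cell values $c_0,\dots,c_{n-1}$, after the Block Algorithm (described in the context) finishes, for every $j$ with $0\le j\le m-z-1$, \[ \bigl|\{k:\ j<k\le s\lfloor j/s\rfloor+t-1,\ c_k<c_j\}\bigr| = v(j), \] i.e., the block of cells $c_0,\dots,c_{m-1}$ represents the target digits $v(0),\dots,v(m-z-1)$ in the $(s,t,n)$-local rank-modulation factoradic representation.
   Context: Cells $c_0,\dots,c_{n-1}$ are real numbers (indices modulo $n$). For $0\le j\le n-1$ let $l(j)=s\lceil (j-t+1)/s\rceil \bmod n$ and $r(j)=(s\lfloor j/s\rfloor+t-1)\bmod n$. Pushing cell $j$ (''push-to-the-top'') replaces $c_j$ by $\max\{c_{l(j)},c_{l(j)+1},\dots,c_{r(j)}\}+1$ (indices cyclic), leaving other cells unchanged. For $0\le j\le m-3$ define $l'(j)=l(j)$ if $0\le l(j)\le m-3$ and $l'(j)=0$ otherwise, and $r'(j)=r(j)$ if $0\le r(j)\le m-3$ and $r'(j)=m-3$ otherwise. Block Algorithm: (1) push cell $n-1$; (2) set $a_k\leftarrow 0$ for $k=0,\dots,m-3$ and $j\leftarrow 0$; (3) repeat: if $v(j)=\sum_{i=j+1}^{r'(j)}a_i$ and $a_j=0$,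 then push cell $j$, set $a_j\leftarrow 1$ and $j\leftarrow l'(j)$; otherwise set $j\leftarrow j+1$; until $j=m-2$; (4) push cell $m-2$. *)

(* Defs.v *)
From HB Require Import structures.
From mathcomp Require Import all_boot all_order all_algebra.
From mathcomp Require Import reals.
Set Implicit Arguments. Unset Strict Implicit. Unset Printing Implicit Defensive.
Import Order.TTheory GRing.Theory Num.Theory.

Section LocalRM.
Variable R : realType.
Variables (s t n : nat).

(* l(j) = s * ceil((j - t + 1)/s) mod n, computed in int (floor division
   intdiv, ceil x = - floor(-x)), then reduced to a nat in [0, n). *)
Definition lidx (j : nat) : nat :=
  `|((s%:Z * (- ((- (j%:Z - t%:Z + 1)) %/ s%:Z)%Z)) %% n%:Z)%Z|%N.

Definition ridx (j : nat) : nat := (s * (j %/ s) + t - 1) %% n.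

Definition cyc_window (l r : nat) : seq nat :=
  [seq (l + k) %% n | k <- iota 0 ((r + n - l) %% n).+1].

Definition push (j : nat) (c : nat -> R) : nat -> R :=
  let mx := foldr Num.max (c (lidx j)) (map c (cyc_window (lidx j) (ridx j))) in
  fun k => if k == j then (mx + 1)%R else c k.

End LocalRM.

Section Block.
Variable R : realType.
Variables (s t n m : nat) (v : nat -> nat).

Definition lidx' (j : nat) : nat :=
  if lidx s t n j <= m - 3 then lidx s t n j else 0.
Definition ridx' (j : nat) : nat :=
  if ridx s t n j <= m - 3 then ridx s t n j else m - 3.

Record bstate := BState { bcells : nat -> R; bbits : nat -> nat; bj : nat }.

Definition body (st : bstate) : bstate :=
  let j := bj st in let a := bbits st in
  if (v j == \sum_(j.+1 <= i < (ridx' j).+1) a i) && (a j == 0%N) then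
    BState (push s t n j (bcells st)) (fun k => if k == j then 1%N else a k)
           (lidx' j)
  else BState (bcells st) a j.+1.

(* "repeat body until j = m-2": LoopRun st f means the loop started in st
   terminates with final cells f *)
Inductive LoopRun : bstate -> (nat -> R) -> Prop :=
| LR_stop st : bj (body st) = (m - 2)%N -> LoopRun st (bcells (body st))
| LR_cont st f : bj (body st) <> (m - 2)%N -> LoopRun (body st) f ->
                 LoopRun st f.

Definition BlockRun (c c' : nat -> R) : Prop :=
  exists f, LoopRun (BState (push s t n (n - 1) c) (fun _ => 0%N) 0) f /\
            c' = push s t n (m - 2) f.

End Block.

Definition local_rank (R : realType) (s t : nat) (c : nat -> R) (j : nat) : nat :=
  count (fun k => (c k < c j)%R) (iota j.+1 (s * (j %/ s) + t - 1 - j)).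

(* Main.v *)
Require Import Defs.
From HB Require Import structures.
From mathcomp Require Import all_boot all_order all_algebra.
From mathcomp Require Import reals zify ring lra.
Set Implicit Arguments. Unset Strict Implicit. Unset Printing Implicit Defensive.
Import Order.TTheory GRing.Theory Num.Theory.
Lemma lidx_cases (s t N p : nat) : 0 < s -> s <= t -> t <= N -> p + t < N ->
  (exists q, lidx s t N p = s * q /\ p < s * q + t /\ s * q + t <= p + s) \/
  (N + 1 - t <= lidx s t N p < N).
Proof.
move=> s0 st tN pN; rewrite /lidx.
set X : int := ((Posz p) - (Posz t) + 1)%R.
set Q : int := (- ((- X) %/ (Posz s))%Z)%R.
have s0' : (0 < Posz s)%R by rewrite ltz_nat.
have hs : ((Posz s) != 0)%R by rewrite eqz_nat -lt0n.
have E := divz_eq (- X) (Posz s).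
have r0 := modz_ge0 (- X) hs.
have r1 := @ltz_pmod (- X) (Posz s) s0'.
set r := ((- X) %% (Posz s))%Z in E r0 r1.
have EY : ((Posz s) * Q = X + r)%R.
  rewrite /Q -[X in RHS]opprK {2}E; ring.
case: (lerP 0%R ((Posz s) * Q)%R) => hY.
- left.
  have hQ : (0 <= Q)%R by rewrite -(pmulr_rge0 _ s0').
  exists `|Q|%N.
  have EQ : Q = Posz `|Q|%N by rewrite gez0_abs.
  rewrite modz_small; last first.
    apply/andP; split => //. rewrite EY /X. lia.
  rewrite {1}EQ -PoszM absz_nat.
  have : ((Posz s) * Q)%R = Posz (s * `|Q|%N) by rewrite {1}EQ PoszM.
  rewrite EY /X. lia.
- right.
  have -> : (((Posz s) * Q) %% (Posz N))%Z = ((Posz s) * Q + (Posz N))%R.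
    rewrite -modzDr modz_small //. rewrite EY /X in hY *. lia.
  rewrite EY /X in hY *. lia.
Qed.
Section Geo.
Variables (s t m : nat).
Hypotheses (s0 : 0 < s) (st : s <= t) (tm : t + 2 <= m).

Lemma mult_le j : s * (j %/ s) <= j.
Proof. by rewrite mulnC leq_divM. Qed.

Lemma mod_lt j : j %% s < s.
Proof. by rewrite ltn_mod. Qed.

Lemma ridx_eq p : p <= m - 3 -> ridx s t (m ^ 2) p = s * (p %/ s) + t - 1.
Proof.
move=> hp; rewrite /ridx modn_small //.
have := mult_le p. nia.
Qed.

Lemma ridx_ge p : p <= s * (p %/ s) + t - 1.
Proof.
have E := divn_eq p s. have := mod_lt p. rewrite mulnC in E. lia.
Qed.

Lemma ridx'_le p : p <= m - 3 -> ridx' s t (m ^ 2) m p <= s * (p %/ s) + t - 1.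
Proof. move=> hp; rewrite /ridx' ridx_eq //; case: ifP => //; lia. Qed.

Lemma ridx'_le3 p : ridx' s t (m ^ 2) m p <= m - 3.
Proof. rewrite /ridx'; case: ifP => //; lia. Qed.

Lemma lidx_c p : p <= m - 3 ->
  (exists q, lidx s t (m ^ 2) p = s * q /\ p < s * q + t /\ s * q + t <= p + s) \/
  (m ^ 2 + 1 - t <= lidx s t (m ^ 2) p < m ^ 2).
Proof. move=> hp; apply: lidx_cases => //; nia. Qed.

Lemma below_l p q i : p < s * q + t -> s * q + t <= p + s -> i < s * q ->
  s * (i %/ s) + t - 1 < p.
Proof.
move=> h1 h2 hi.
have : i %/ s < q by rewrite ltn_divLR // mulnC.
move=> hq. have : s * (i %/ s).+1 <= s * q by rewrite leq_pmul2l.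
rewrite mulnS. lia.
Qed.

Lemma lidx'_le p : p <= m - 3 -> lidx' s t (m ^ 2) m p <= p.
Proof.
move=> hp; rewrite /lidx'; case: ifP => // hl.
case: (lidx_c hp) => [[q [-> [h1 h2]]]|]; first lia.
lia.
Qed.

Lemma lidx'_below p i : p <= m - 3 -> i < lidx' s t (m ^ 2) m p ->
  s * (i %/ s) + t - 1 < p.
Proof.
move=> hp; rewrite /lidx'; case: ifP => // hl.
case: (lidx_c hp) => [[q [E [h1 h2]]]|]; last lia.
rewrite E; exact: below_l.
Qed.

Lemma in_cyc N l r x : l < N -> r < N -> x < N ->
  (l <= x <= r) \/ (r < l /\ x <= r) -> x \in cyc_window N l r.
Proof.
move=> lN rN xN [/andP[h1 h2]|[h1 h2]]; apply/mapP.
- exists (x - l); first by rewrite mem_iota /= add0n ltnS (_ : r + N - l = (r - l) + N); [rewrite modnDr modn_small; lia | lia].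
  by rewrite subnKC // modn_small.
- exists (x + N - l).
    rewrite mem_iota /= add0n ltnS modn_small; lia.
  have -> : l + (x + N - l) = x + N by lia.
  by rewrite modnDr modn_small.
Qed.

Lemma win p x : p <= m - 3 -> x <= m - 3 ->
  (p <= x <= s * (p %/ s) + t - 1) \/ (x < p <= s * (x %/ s) + t - 1) ->
  x \in cyc_window (m ^ 2) (lidx s t (m ^ 2) p) (ridx s t (m ^ 2) p).
Proof.
move=> hp hx H.
have hm : m - 3 + m < m ^ 2 by nia.
have rp := ridx_eq hp. have rg := ridx_ge p. have ml := mult_le p.
case: (lidx_c hp) => [[q [E [h1 h2]]]|/andP[h1 h2]].
- apply: in_cyc; rewrite ?E ?rp; try lia.
  left. case: H => H; first lia.
  case: (ltnP x (s * q)) => hx'; last lia.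
  have := below_l h1 h2 hx'. lia.
- apply: in_cyc; rewrite ?rp; try lia.
Qed.

End Geo.

Lemma foldr_max_ge (R : realType) (c : nat -> R) a (w : seq nat) x :
  x \in w -> (c x <= foldr Num.max a (map c w))%R.
Proof.
elim: w => //= y w IH; rewrite in_cons => /orP[/eqP->|/IH h].
  by rewrite le_max lexx.
by rewrite le_max h orbT.
Qed.

Lemma push_other (R : realType) s t N j (c : nat -> R) k :
  k != j -> push s t N j c k = c k.
Proof. by move=> h; rewrite /push (negbTE h). Qed.

Lemma push_gt (R : realType) s t N j (c : nat -> R) x :
  x \in cyc_window N (lidx s t N j) (ridx s t N j) -> (c x < push s t N j c j)%R.
Proof.
move=> h; rewrite /push eqxx.
have := foldr_max_ge c (c (lidx s t N j)) h. lra.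
Qed.

Lemma count_upd (l : seq nat) (b : pred nat) p : uniq l -> b p = false ->
  count (fun k => if k == p then true else b k) l = count b l + (p \in l).
Proof.
move=> ul bp.
rewrite -count_uniq_mem // -count_predUI.
have -> : count (predI b (pred1 p)) l = 0.
  rewrite (eq_count (a2 := pred0)) ?count_pred0 // => k /=.
  by case: eqP => [->|]; rewrite ?bp ?andbF.
rewrite addn0; apply: eq_count => k /=.
by case: eqP => _; rewrite ?orbT ?orbF.
Qed.

Lemma count_false (l : seq nat) : count (fun k : nat => (0:nat) != 0) l = 0.
Proof. by elim: l. Qed.

Lemma sum_count (a : nat -> nat) (l : seq nat) : (forall k, a k <= 1) ->
  \sum_(k <- l) a k = count (fun k => a k != 0) l.
Proof.
move=> ha; elim: l => [|y l IH]; rewrite ?big_nil ?big_cons //= IH.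
by case: (a y) (ha y) => [|[|]].
Qed.

Section Main.
Variables (R : realType) (s t m : nat) (v : nat -> nat).
Hypotheses (s0 : 0 < s) (st : s <= t) (tm : t + 2 <= m).
Local Notation N := (m ^ 2).
Local Notation rr := (ridx' s t (m ^ 2) m).

Definition Sc (a : nat -> nat) i := count (fun k => a k != 0) (iota i.+1 (rr i - i)).

Definition Inv (x : bstate R) : Prop :=
  [/\ forall k, bbits x k <= 1,
      forall i, i <= m - 3 -> bbits x i = 0 -> Sc (bbits x) i <= v i,
      forall i, i < bj x -> bbits x i != 0 \/ Sc (bbits x) i < v i &
      forall i, i <= m - 3 -> bbits x i != 0 ->
        (forall k, i < k <= rr i -> bbits x k = 0 -> (bcells x k < bcells x i)%R) /\
        count (fun k => (bbits x k != 0) && (bcells x k < bcells x i)%R)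
              (iota i.+1 (rr i - i)) = v i].

Lemma sum_Sc a i : (forall k, a k <= 1) ->
  \sum_(i.+1 <= k < (rr i).+1) a k = Sc a i.
Proof. by move=> ha; rewrite /index_iota subSS sum_count. Qed.

Lemma Sc_upd a p i : a p = 0 ->
  Sc (fun k => if k == p then 1 else a k) i = Sc a i + (i < p <= rr i).
Proof.
move=> ap; rewrite /Sc.
rewrite (eq_count (a2 := fun k => if k == p then true else a k != 0)); last first.
  by move=> k /=; case: (k == p).
rewrite count_upd ?iota_uniq ?ap // mem_iota.
congr (_ + nat_of_bool _).
by apply/idP/idP => /andP[h1 h2]; apply/andP; split; lia.
Qed.

Lemma body_inv x : bj x <= m - 3 -> Inv x -> Inv (body s t N m v x) /\ bj (body s t N m v x) <= m - 2.
Proof.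
case: x => c a p /= hp; rewrite {1}/Inv /=; case=> I1 I2 I3 I4; rewrite /body /= sum_Sc //.
case: ifP => [/andP[/eqP hv /eqP ha]|hc] /=; last first.
  split; last lia.
  split => //= i; rewrite ltnS leq_eqVlt => /orP[/eqP ->|/I3 //].
  case: eqP => hap; last by left; apply/eqP.
  right; have h := I2 p hp hap; move: hc; rewrite hap eqxx andbT => /negbT hne.
  by rewrite ltn_neqAle h andbT eq_sym.
split; last by have := lidx'_le s0 st tm hp; lia.
set a' := fun k => _.
set c' := push s t N p c.
have c'o : forall k, k != p -> c' k = c k by move=> k; exact: push_other.
split => /=.
- by move=> k; rewrite /a'; case: eqP.
- move=> i hi; rewrite /a'; case: eqP => // /eqP hip ai.
  rewrite Sc_upd //.
  have h2 : Sc a i <= v i := I2 i hi ai.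
  case: (ltnP i p) => h /=; last by case: (p <= rr i); lia.
  case: (I3 i h) => [/eqP//|/= h3].
  case: (p <= rr i); lia.
- move=> i hi.
  have hip : i < p by have := lidx'_le s0 st tm hp; lia.
  have hi3 : i <= m - 3 by lia.
  rewrite /a' (ltn_eqF hip) Sc_upd // hip /=.
  have := lidx'_below s0 st tm hp hi. have := ridx'_le s0 st tm hi3.
  move=> h1 h2; have e : (p <= rr i) = false by apply/negbTE; rewrite -ltnNge; lia.
  by rewrite e addn0; exact: I3.
- move=> i hi; rewrite /a'; case: (eqVneq i p) => [->|hip].
  + move=> _.
    split.
    * move=> k hk; case: eqP => // /eqP hkp _.
      rewrite c'o //; apply: push_gt; apply: win => //.
        by have := ridx'_le3 s t m p; lia.
      by have := ridx'_le s0 st tm hp; left; lia.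
    * rewrite hv /Sc; apply: eq_in_count => k; rewrite mem_iota => hk.
      have hkp : k != p by rewrite neq_ltn; apply/orP; right; lia.
      rewrite (negbTE hkp) c'o //.
      have -> : (c k < c' p)%R; last by rewrite andbT.
      apply: push_gt; apply: win => //.
        by have := ridx'_le3 s t m p; lia.
      by have := ridx'_le s0 st tm hp; left; lia.
  + move=> /= ai.
    have [H1 H2] := I4 i hi ai.
    rewrite c'o //; split.
    * move=> k hk; case: eqP => // /eqP hkp ak.
      by rewrite c'o // H1.
    * rewrite -H2; apply: eq_in_count => k; rewrite mem_iota => hk.
      case: (eqVneq k p) hk => [->|hkp] hk; last by rewrite c'o.
      rewrite ha eqxx /=.
      apply/negbTE; rewrite -leNgt; apply/ltW; apply: push_gt; apply: win => //.
      by have := ridx'_le s0 st tm hi; right; lia.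
Qed.


Lemma run_final x f : LoopRun s t N m v x f -> bj x <= m - 3 -> Inv x ->
  exists a, Inv (BState f a (m - 2)).
Proof.
elim => [y hy|y g hne _ IH] hp I; have [I' hb] := body_inv hp I.
  exists (bbits (body s t N m v y)).
  by move: I' hy; case: (body s t N m v y) => c a p /= I' hp2; rewrite -hp2.
apply: IH => //; lia.
Qed.

Definition mu (x : bstate R) :=
  (m - 2 - count (fun i => bbits x i != 0) (iota 0 (m - 2))) * m + (m - 2 - bj x).

Lemma body_mu x : bj x <= m - 3 -> Inv x -> mu (body s t N m v x) < mu x.
Proof.
case: x => c a p /= hp; rewrite {1}/Inv /=; case=> I1 I2 I3 I4.
rewrite /mu /body /= sum_Sc //.
have hl := lidx'_le s0 st tm hp.
case: ifP => [/andP[_ /eqP ha]|_] /=; last lia.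
rewrite (eq_count (a2 := fun k => if k == p then true else a k != 0)); last first.
  by move=> k /=; case: (k == p).
have := count_size (fun k => if k == p then true else a k != 0) (iota 0 (m - 2)).
rewrite size_iota count_upd ?iota_uniq ?ha // mem_iota /=.
have -> : p < 0 + (m - 2) by lia.
set C := count _ _ => hC /=.
have : m - 2 - (C + 1) < m - 2 - C by lia.
move: (m - 2 - (C + 1)) (m - 2 - C) => u w huw.
have : u * m + m <= w * m by rewrite addnC -mulSn leq_mul2r huw orbT.
lia.
Qed.

Lemma run_exists B x : mu x < B -> bj x <= m - 3 -> Inv x ->
  exists f, LoopRun s t N m v x f.
Proof.
elim: B x => // B IH x hB hp I; have [I' hb] := body_inv hp I.
case: (eqVneq (bj (body s t N m v x)) (m - 2)) => e.
  by exists (bcells (body s t N m v x)); apply: LR_stop.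
have hm := body_mu hp I.
have [f hf] : exists f, LoopRun s t N m v (body s t N m v x) f.
  by apply: IH => //; lia.
by exists f; apply: LR_cont => //; apply/eqP.
Qed.

Hypothesis sm : s %| m.
Hypothesis vb : forall j, j < m -> v j <= t - 1 - j %% s.
Hypothesis vz : forall j, m - s * ((t + 2 + s - 1) %/ s - 1) <= j < m -> v j = 0.

Lemma Lz i : m - 3 < s * (i %/ s) + t - 1 -> m - s * ((t + 2 + s - 1) %/ s - 1) <= i.
Proof.
move=> h.
have [M hM] := dvdnP sm.
have -> : t + 2 + s - 1 = (t + 1) + s by lia.
rewrite divnDr ?dvdnn // divnn s0 addnK.
have ml := mult_le s i.
set a := i %/ s in h ml *; set b := (t + 1) %/ s.
have Eb := divn_eq (t + 1) s; have rb := ltn_mod (t + 1) s.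
rewrite -/b mulnC in Eb.
have h1 : s * M < s * (a + b + 1).
  rewrite !mulnDr muln1; lia.
rewrite ltn_pmul2l // in h1.
have h2 : s * M <= s * (a + b) by rewrite leq_pmul2l //; lia.
rewrite mulnDr in h2. lia.
Qed.

Lemma vbound i : i <= m - 3 -> v i <= rr i - i.
Proof.
move=> hi; rewrite /ridx' ridx_eq //; case: ifP => h.
  have := vb (_ : i < m); have E := divn_eq i s; rewrite mulnC in E.
  move=> H; have := H ltac:(lia); lia.
rewrite vz; first by [].
have := Lz (_ : m - 3 < s * (i %/ s) + t - 1).
move/negbT: h; rewrite -ltnNge => h; have := Lz h; lia.
Qed.

Lemma all_pushed c a : Inv (BState c a (m - 2)) -> forall i, i <= m - 3 -> a i != 0.
Proof.
rewrite /Inv /=; case=> I1 I2 I3 I4.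
have step : forall i, i <= m - 3 -> (forall k, i < k <= rr i -> a k != 0) -> a i != 0.
  move=> i hi H; case: (I3 i ltac:(lia)) => // h.
  have : Sc a i = rr i - i.
    rewrite /Sc (eq_in_count (a2 := predT)) ?count_predT ?size_iota // => k.
    rewrite mem_iota => hk; apply: H; lia.
  have := vbound hi. lia.
suff H : forall d i, m - 3 - i <= d -> i <= m - 3 -> a i != 0.
  by move=> i hi; exact: (H (m - 3 - i)).
elim => [|d IH] i hd hi; apply: step => // k hk.
  have := ridx'_le3 s t m i; lia.
apply: IH; have := ridx'_le3 s t m i; lia.
Qed.

End Main.

Theorem theorem9 (R : realType) (s t m : nat) (v : nat -> nat)
  (c : nat -> R) :
  0 < s -> s <= t -> s %| m -> t + 2 <= m ->
  let n := m ^ 2 in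
  let z := s * ((t + 2 + s - 1) %/ s - 1) in
  (forall j, j < m -> v j <= t - 1 - j %% s) ->
  (forall j, m - z <= j < m -> v j = 0) ->
  (forall i k, i < n -> k < n -> i <> k -> c i <> c k) ->
  (exists c' : nat -> R, BlockRun s t n m v c c') /\
  (forall c' : nat -> R, BlockRun s t n m v c c' ->
     forall j, j <= m - z - 1 -> local_rank s t c' j = v j).
Proof.
move=> s0 st sm tm n z vb vz _.
have I0 : Inv s t m v (BState (push s t n (n - 1) c) (fun _ => 0) 0).
  split; [by [] | by move=> i _ _; rewrite /Sc count_false | by [] | by []].
split.
  have [f hf] := run_exists s0 st tm (ltnSn (mu m (BState (push s t n (n - 1) c) (fun _ => 0) 0))) (leq0n _) I0.
  by exists (push s t n (m - 2) f), f.
move=> c' [f [hf ->]] j hj.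
have [a Ia] := run_final s0 st tm hf (leq0n _) I0.
have ap := all_pushed s0 st tm sm vb vz Ia.
have hz : z <= t + 1.
  rewrite /z (_ : t + 2 + s - 1 = (t + 1) + s); last by lia.
  rewrite divnDr ?dvdnn // divnn s0 addnK.
  exact: mult_le.
have hr : s * (j %/ s) + t - 1 <= m - 3.
  rewrite leqNgt; apply/negP => /(Lz s0 st tm sm); rewrite -/z; lia.
have hj3 : j <= m - 3 by have := ridx_ge s0 st tm j; lia.
case: Ia => _ _ _ I4.
have [_ H2] := I4 j hj3 (ap j hj3).
rewrite /= /ridx' (ridx_eq s0 st tm hj3) hr in H2.
have K : forall k : nat, j < k < j.+1 + (s * (j %/ s) + t - 1 - j) -> k < m - 2.
  move=> k; move: hr tm; clear; move: (s * (j %/ s)) => x; lia.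
have hj2 : j < m - 2 by move: hj3 tm s0 st; clear; lia.
rewrite /local_rank -H2; apply: eq_in_count => k; rewrite mem_iota => hk.
have hk2 := K k hk.
rewrite !push_other; first by rewrite ap // -ltnS (_ : (m - 3).+1 = m - 2) //; move: hj2; clear; lia.
  by rewrite neq_ltn ?hk2 ?hj2.
by rewrite neq_ltn ?hk2 ?hj2.
Qed.
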